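(* Let $G\sim\mathcal{G}(n,p)$ and let $m$ denote its (random) number of edges. Then the average complexity of best-first branch-and-bound with potentials for maximum independent set on $G$ satisfies $$\mathbb{T}(n,p)\le\sum_{i=0}^{n}\sum_{k=0}^{i}\binom{i}{k}(1-p)^{\binom{k}{2}}\cdot\mathbb{P}\left(m\ge\frac{n^2}{2(n-i+k)}-\frac{n}{2}\right).$$
   Context: $\mathcal{G}(n,p)$ is the binomial random graph on $n$ vertices in which each of the $\binom{n}{2}$ pairs of vertices is an edge with probability $p$, independently. The branch-and-bound algorithm processes the vertices in a fixed order $v_1,\dots,v_n$; a node $t$ at level $i$ of the binary search tree corresponds to a partial solution $P(t,i)\subseteq\{v_1,\dots,v_i\}$, its two children being $P(t,i)\cup\{v_{i+1}\}$ and $P(t,i)$. Each partial solution $S=P(t,i)$ has potential (evaluation) $u(S)=|S|+n-i$. Nodes whose partial solution is not an independent set are discarded; among the remaining unexplored nodes, the algorithm always expands one of largest potential (best-first rule); the first complete solution (level $n$) obtained is returned and all other branches are pruned. $\mathbb{T}(n,p)$ denotes the expected number of nodes handled by this algorithm when $G\sim\mathcal{G}(n,p)$. *)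

(* Defs.v *)
From HB Require Import structures.
From mathcomp Require Import all_boot all_order all_algebra.
Set Implicit Arguments. Unset Strict Implicit. Unset Printing Implicit Defensive.
Import Order.TTheory GRing.Theory Num.Theory.

(** Vertices v_1,...,v_n are the ordinals 0,...,n-1 of 'I_n (v_{j+1} = j).
    A (simple) graph on 'I_n is its edge set, a subset of the pairs (x,y)
    with x < y. *)
Definition gpairs (n : nat) : {set 'I_n * 'I_n} := [set e : 'I_n * 'I_n | (val e.1 < val e.2)%N].

Definition is_graph (n : nat) (G : {set 'I_n * 'I_n}) : bool := G \subset gpairs n.

Definition adj (n : nat) (G : {set 'I_n * 'I_n}) (x y : 'I_n) : bool :=
  ((x, y) \in G) || ((y, x) \in G).

Definition independent (n : nat) (G : {set 'I_n * 'I_n}) (S : {set 'I_n}) : bool :=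
  [forall x in S, forall y in S, (x != y) ==> ~~ adj G x y].

(** Nodes of the binary search tree: (level i, partial solution P(t,i)),
    with P(t,i) a subset of {v_1,...,v_i}. *)
Definition node (n : nat) := (nat * {set 'I_n})%type.

Definition potential (n : nat) (t : node n) : nat := #|t.2| + n - t.1.

Definition vnext (n : nat) (i : nat) : {set 'I_n} := [set v : 'I_n | val v == i].

Definition children (n : nat) (t : node n) : seq (node n) :=
  [:: (t.1.+1, t.2 :|: vnext n t.1); (t.1.+1, t.2)].

Definition best_first_rule (n : nat)
    (choose : {set 'I_n * 'I_n} -> seq (node n) -> node n) : Prop :=
  forall G s, s != [::] ->
    choose G s \in s /\ (forall t, t \in s -> potential t <= potential (choose G s)).

Fixpoint bb_run (n : nat) (choose : {set 'I_n * 'I_n} -> seq (node n) -> node n)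
    (G : {set 'I_n * 'I_n}) (fuel : nat) (open : seq (node n)) (count : nat) : nat :=
  match fuel with
  | 0 => count
  | f.+1 =>
    match open with
    | [::] => count
    | _ :: _ =>
      let t := choose G open in
      let open' := rem t open in
      if t.1 == n then count.+1
      else bb_run choose G f
             ([seq c <- children t | independent G c.2] ++ open') count.+1
    end
  end.

(** Number of nodes handled on graph G.  The fuel 2^(n+1) exceeds the number
    of nodes of the search tree, so it is never exhausted. *)
Definition nodes_handled (n : nat)
    (choose : {set 'I_n * 'I_n} -> seq (node n) -> node n)
    (G : {set 'I_n * 'I_n}) : nat :=
  bb_run choose G (2 ^ n.+1) [:: (0%N, set0)] 0.

Local Open Scope ring_scope.

Definition gnp_weight (R : realFieldType) (n : nat) (p : R)
    (G : {set 'I_n * 'I_n}) : R :=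
  p ^+ #|G| * (1 - p) ^+ ('C(n, 2) - #|G|).

Definition gnp_prob (R : realFieldType) (n : nat) (p : R)
    (A : {set 'I_n * 'I_n} -> bool) : R :=
  \sum_(G : {set 'I_n * 'I_n} | is_graph G && A G) gnp_weight p G.

Definition gnp_expect (R : realFieldType) (n : nat) (p : R)
    (X : {set 'I_n * 'I_n} -> R) : R :=
  \sum_(G : {set 'I_n * 'I_n} | is_graph G) gnp_weight p G * X G.

Definition T_avg (R : realFieldType) (n : nat) (p : R)
    (choose : {set 'I_n * 'I_n} -> seq (node n) -> node n) : R :=
  gnp_expect p (fun G => (nodes_handled choose G)%:R).

(** The event m >= n^2/(2(n-i+k)) - n/2, where m = #|G| is the number of
    edges; when n-i+k = 0 the threshold is +infinity (n >= 1), so the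
    event is empty. *)
Definition edge_event (R : realFieldType) (n i k : nat) (G : {set 'I_n * 'I_n}) : bool :=
  ((n - i + k)%N != 0%N) &&
  ((n%:R ^+ 2 / (2 * (n - i + k)%:R) - n%:R / 2 : R) <= (#|G|)%:R).

(* Main.v *)
Require Import Defs.
From HB Require Import structures.
From mathcomp Require Import all_boot all_order all_algebra.
From mathcomp Require Import zify ring lra.
Import Order.TTheory GRing.Theory Num.Theory.
Set Implicit Arguments. Unset Strict Implicit. Unset Printing Implicit Defensive.

Definition ltset (n i : nat) : {set 'I_n} := [set v : 'I_n | (val v < i)%N].

Lemma card_ltset n i : (i <= n)%N -> #|ltset n i| = i.
Proof.
move=> Hi.
have -> : ltset n i = [set widen_ord Hi j | j : 'I_i].
  apply/setP => v; rewrite !inE; apply/idP/imsetP => [Hv|[j _ ->]] /=.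
    by exists (Ordinal Hv) => //; apply: val_inj.
  exact: ltn_ord.
rewrite card_imset ?card_ord //; by move=> a b [] /val_inj.
Qed.

Definition pairs_in n (A : {set 'I_n}) : {set 'I_n * 'I_n} :=
  [set e in gpairs n | (e.1 \in A) && (e.2 \in A)].

Definition fpair n (x a : 'I_n) := if (val a < val x)%N then (a, x) else (x, a).

Lemma card_pairs_in n (A : {set 'I_n}) : #|pairs_in A| = 'C(#|A|, 2).
Proof.
move Hk: #|A| => k; elim: k A Hk => [|k IH] A Hk.
  have : A = set0 by apply/eqP; rewrite -cards_eq0 Hk.
  move=> ->.
  apply/eqP; rewrite cards_eq0; apply/eqP/setP => e; rewrite !inE.
  by case: (_ < _)%N.

have : (0 < #|A|)%N by rewrite Hk.
rewrite card_gt0 => /set0Pn [x Hx].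
pose B := A :\ x.
have HB : #|B| = k by move: Hk; rewrite (cardsD1 x A) Hx add1n => -[].
have HxB : x \notin B by rewrite !inE eqxx.
have HA : A = x |: B by rewrite setD1K.
clearbody B.
pose f := fpair x.
have finj : injective f.
  move=> a b; rewrite /f /fpair.
  case: ifP => Ha; case: ifP => Hb [] => //.
  - by move=> E1 E2; move: Ha; rewrite E1 ltnn.
  - by move=> E1 E2; move: Hb; rewrite -E1 ltnn.
have -> : pairs_in A = pairs_in B :|: [set f a | a in B].
  apply/setP => e; rewrite !inE HA !inE.
  case: e => a b /=.
  apply/idP/idP.
  - move=> /andP [Hab /andP [/orP [/eqP Ha|Ha] /orP [/eqP Hb|Hb]]].
    + by move: Hab; rewrite Ha Hb ltnn.
    + apply/orP; right; apply/imsetP; exists b => //.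
      by rewrite /f /fpair Ha ifN // -leqNgt ltnW // -Ha.
    + apply/orP; right; apply/imsetP; exists a => //.
      by rewrite /f /fpair Hb -Hb Hab.
    + by rewrite Hab Ha Hb.
  - move=> /orP [/andP [-> /andP [Ha Hb]]|/imsetP [c Hc]].
    + by rewrite Ha Hb !orbT.
    + rewrite /f /fpair.
      case: ifP => Hlt [-> ->]; first by rewrite Hlt eqxx Hc orbT.
      rewrite eqxx Hc orbT /= andbT.
      rewrite ltn_neqAle leqNgt Hlt andbT.
      by apply/eqP => /val_inj Hxc; move: HxB; rewrite Hxc Hc.
rewrite cardsU card_imset // (IH B HB) HB.
have -> : pairs_in B :&: [set f a | a in B] = set0.
  apply/setP => e; rewrite !inE; apply/negP => /andP [].
  case/andP => _ /andP [H1 H2] /imsetP [c _ Hc].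
  by move: H1 H2; rewrite Hc /f /fpair; case: ifP => _ /=; rewrite (negbTE HxB) ?andbF.
by rewrite cards0 subn0 binS bin1 addnC.
Qed.

Lemma card_gpairs n : #|gpairs n| = 'C(n, 2).
Proof.
have -> : gpairs n = pairs_in [set: 'I_n].
  by apply/setP => e; rewrite /pairs_in !inE; case: (_ < _)%N.
by rewrite card_pairs_in cardsT card_ord.
Qed.

Section Turan.
Variable n : nat.
Variable G : {set 'I_n * 'I_n}.
Hypothesis HG : is_graph G.

Definition deg (U : {set 'I_n}) (u : 'I_n) : nat := #|[set w in U | adj G u w]|.
Definition oc (A U : {set 'I_n}) : nat := \sum_(u in A) deg U u.

Lemma adj_irr u : adj G u u = false.
Proof.
rewrite /adj orbb; apply/negP => H.
by move: (subsetP HG _ H); rewrite inE ltnn.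
Qed.

Lemma adj_sym u w : adj G u w = adj G w u.
Proof. by rewrite /adj orbC. Qed.

Lemma amgm (x y : nat) : 2 * (x * y) <= x ^ 2 + y ^ 2.
Proof. case: (leqP x y) => H.
  have [t ->] : exists t, y = x + t by exists (y - x); lia. nia.
  have [t ->] : exists t, x = y + t by exists (x - y); lia. nia.
Qed.
Lemma arith (a k s d X Y Z : nat) :
  k ^ 2 <= a * (X + k) -> X + Y <= Z -> s * d <= Y -> s = d.+1 ->
  (k + s) ^ 2 <= a.+1 * (Z + (k + s)).
Proof.
move=> H1 H2 H3 H4.
have H6 : X + s ^ 2 <= Z + s.
  have : s ^ 2 = s * d + s by rewrite H4; ring.
  lia.
have E0 : (k + s) ^ 2 = k ^ 2 + 2 * (k * s) + s ^ 2 by ring.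
have E3 : a.+1 * (X + s ^ 2 + k) = a * (X + k) + a * s ^ 2 + X + k + s ^ 2 by ring.
have H7 : a.+1 * (X + s ^ 2 + k) <= a.+1 * (Z + (k + s)).
  rewrite leq_pmul2l //; lia.
case: a H1 E3 H7 => [|b] H1 E3 H7.
  have Hk : k = 0.
    by move: H1; rewrite mul0n leqn0 expn_eq0 => /andP [/eqP].
  subst k. lia.
have Hsq := amgm (b.+1 * s) k.
have E1 : b.+1 * (X + k + b.+1 * s ^ 2) = b.+1 * (X + k) + (b.+1 * s) ^ 2 by ring.
have E2 : b.+1 * (2 * (k * s)) = 2 * (b.+1 * s * k) by ring.
have H5 : b.+1 * (2 * (k * s)) <= b.+1 * (X + k + b.+1 * s ^ 2) by lia.
rewrite leq_pmul2l // in H5.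
lia.
Qed.

Lemma turan_U (U : {set 'I_n}) :
  exists I : {set 'I_n}, [/\ I \subset U, independent G I &
     #|U| ^ 2 <= #|I| * (oc U U + #|U|)].
Proof.
have [c Hc] : exists c, #|U| <= c by exists #|U|.
elim: c U Hc => [|c IH] U Hc.
  exists set0; split; first exact: sub0set.
    by apply/forallP => x; rewrite inE.
  by move: Hc; rewrite leqn0 => /eqP ->.
case: (set_0Vmem U) => [HU0|[v0 Hv0]].
  exists set0; split; first exact: sub0set.
    by apply/forallP => x; rewrite inE.
  by rewrite HU0 cards0.
case: (arg_minnP (deg U) (Hv0 : (mem U) v0)) => v Hv0v Hmin.
have Hv : v \in U := Hv0v.
pose Nb := [set w in U | adj G v w].
pose N := v |: Nb.
have HvNb : v \notin Nb by rewrite inE adj_irr andbF.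
have HcardN : #|N| = (deg U v).+1 by rewrite cardsU1 HvNb.
have HNU : N \subset U.
  by apply/subsetP => x; rewrite !inE => /orP [/eqP ->|/andP []].
pose U' := U :\: N.
have HcU : #|U| = #|U'| + #|N|.
  by rewrite cardsD (setIidPr HNU) subnK //; exact: subset_leq_card HNU.
have HU'lt : #|U'| <= c by lia.
have [I' [HI'U' HI'ind HI']] := IH U' HU'lt.
have HvI' : v \notin I'.
  apply/negP => /(subsetP HI'U'); rewrite !inE; by rewrite eqxx.
exists (v |: I'); split.
- rewrite subUset sub1set Hv; apply: subset_trans HI'U' _; exact: subsetDl.
- have HnadjU : forall y, y \in I' -> ~~ adj G v y.
    move=> y /(subsetP HI'U'); rewrite !inE negb_or => /andP [/andP [_ Hy] HyU].
    by move: Hy; rewrite HyU.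
  apply/forallP => x; apply/implyP; rewrite !inE => Hx.
  apply/forallP => y; apply/implyP; rewrite !inE => Hy.
  apply/implyP => Hxy.
  case/orP: Hx => [/eqP Ex|Hx]; case/orP: Hy => [/eqP Ey|Hy].
  + by rewrite Ex Ey eqxx in Hxy.
  + by rewrite Ex; apply: HnadjU.
  + by rewrite Ey adj_sym; apply: HnadjU.
  + by move/forallP: HI'ind => /(_ x); rewrite Hx => /forallP /(_ y); rewrite Hy Hxy.
- rewrite cardsU1 HvI' add1n HcU.
  apply: (arith (d := deg U v) (X := oc U' U') (Y := oc N U)) => //.
  + rewrite /oc [X in _ <= X](bigID (fun u => u \in N)) /= [X in _ <= X]addnC.
    apply: leq_add.
      apply: (@leq_trans (\sum_(u in U') deg U u)).
        apply: leq_sum => u _; apply: subset_leq_card; apply/subsetP => w; rewrite !inE.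
        by case/andP => /andP [_ ->] ->.
      apply: eq_leq; apply: eq_bigl => u; rewrite !inE andbC; done.
    apply: eq_leq; apply: eq_bigl => u /=.
    case: (boolP (u \in N)) => HuN; last by rewrite andbF.
    by rewrite (subsetP HNU _ HuN).
  + rewrite /oc -sum_nat_const; apply: leq_sum => u HuN.
    by apply: Hmin; apply: (subsetP HNU).
Qed.

Lemma card_row (f : 'I_n -> 'I_n -> 'I_n * 'I_n) :
  (forall x, x = f x.1 x.2) ->
  \sum_(u : 'I_n) #|[set w | f u w \in G]| = #|G|.
Proof.
move=> Hf.
rewrite (eq_bigr (fun u => \sum_(w : 'I_n) (f u w \in G : nat))); last first.
  by move=> u _; rewrite -sum1dep_card big_mkcond.
rewrite pair_big /= -sum1_card [RHS]big_mkcond /=.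
by apply: eq_bigr => x _; rewrite -Hf; case: (x \in G).
Qed.

Lemma card_col :
  \sum_(u : 'I_n) #|[set w | (w, u) \in G]| = #|G|.
Proof.
rewrite (eq_bigr (fun u => \sum_(w : 'I_n) ((w, u) \in G : nat))); last first.
  by move=> u _; rewrite -sum1dep_card big_mkcond.
rewrite exchange_big pair_big /= -sum1_card [RHS]big_mkcond /=.
by apply: eq_bigr => x _; rewrite -surjective_pairing; case: (x \in G).
Qed.

Lemma oc_total : oc setT setT <= 2 * #|G|.
Proof.
rewrite /oc mul2n -addnn.
rewrite -{1}(card_row (f := fun u w => (u, w))); last by case.
rewrite -card_col -big_split /=.
rewrite [X in X <= _](eq_bigl (fun _ => true)); last by move=> u; rewrite inE.
apply: leq_sum => u _.
rewrite /deg.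
have -> : [set w in [set: 'I_n] | adj G u w] =
   [set w | (u, w) \in G] :|: [set w | (w, u) \in G].
  by apply/setP => w; rewrite !inE.
exact: leq_card_setU.
Qed.

End Turan.

Section Alg.
Variable n : nat.
Variable choose : {set 'I_n * 'I_n} -> seq (node n) -> node n.
Hypothesis Hrule : best_first_rule choose.
Variable G : {set 'I_n * 'I_n}.
Variable I : {set 'I_n}.
Hypothesis HI : independent G I.

Definition parent (x : node n) : node n := (x.1.-1, x.2 :\: vnext n x.1.-1).
Definition valid (x : node n) : bool :=
  [&& (x.1 <= n)%N, x.2 \subset ltset n x.1 & independent G x.2].
Definition Qn (x : node n) : bool := valid x && (#|I| <= potential x)%N.
Definition anc (i : nat) : node n := (i, I :&: ltset n i).

Definition Mb := #|[set y : 'I_n.+1 * {set 'I_n} | Qn (val y.1, y.2)]|.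

Lemma final_bound (L : seq (node n)) :
  uniq L -> (forall x, x \in L -> Qn x) -> (size L <= Mb)%N.
Proof.
move=> HU HQ.
pose h := fun x : node n => ((inord x.1 : 'I_n.+1), x.2).
have Hle : forall x, x \in L -> (x.1 < n.+1)%N.
  by move=> x /HQ /andP [/and3P [H _ _] _].
rewrite -(size_map h) /Mb cardE; apply: uniq_leq_size.
  rewrite map_inj_in_uniq // => x y Hx Hy [E1 E2].
  case: x y Hx Hy E1 E2 => [x1 x2] [y1 y2] Hx Hy /= E1 E2.
  have := Hle _ Hx; have := Hle _ Hy => /= Hy1 Hx1.
  by rewrite -(inordK Hx1) -(inordK Hy1) E1 E2.
move=> y /mapP [x Hx ->]; rewrite mem_enum inE /= inordK; last exact: Hle.
by rewrite -surjective_pairing; apply: HQ.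
Qed.

Lemma indep_sub (S T : {set 'I_n}) :
  S \subset T -> independent G T -> independent G S.
Proof.
move=> HST /forallP HT; apply/forallP => x; apply/implyP => Hx.
apply/forallP => y; apply/implyP => Hy.
move: (HT x); rewrite (subsetP HST _ Hx) /= => /forallP /(_ y).
by rewrite (subsetP HST _ Hy).
Qed.

Lemma pot_anc i : (i <= n)%N -> (#|I| <= potential (anc i))%N.
Proof.
move=> Hi; rewrite /potential /=.
rewrite -(cardsID (ltset n i) I).
have : (#|I :\: ltset n i| <= n - i)%N.
  have H1 : #|~: ltset n i| = (n - i)%N.
    by have := cardsC (ltset n i); rewrite card_ltset // card_ord; lia.
  rewrite -H1; apply: subset_leq_card; rewrite setDE; exact: subsetIr.
by move=> H2; rewrite -addnBA // leq_add2l.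
Qed.

Definition Inv (o H : seq (node n)) : Prop :=
  [/\ uniq (o ++ H),
      (forall x, x \in o ++ H -> valid x),
      (forall x, x \in o ++ H -> (0 < x.1)%N -> parent x \in H),
      (forall x, x \in H -> (#|I| <= potential x)%N) &
      (exists2 i, (i <= n)%N & anc i \in o)].

Lemma vnext_disj (S : {set 'I_n}) i :
  S \subset ltset n i -> S :&: vnext n i = set0.
Proof.
move=> Ht; apply/setP => v; rewrite !inE; apply/negbTE/negP => /andP [Hv /eqP Hvi].
by move: (subsetP Ht _ Hv); rewrite inE Hvi ltnn.
Qed.

Lemma ltsetS i : ltset n i.+1 = ltset n i :|: vnext n i.
Proof. by apply/setP => v; rewrite !inE ltnS leq_eqVlt orbC. Qed.

Lemma parent_child (t c : node n) :
  t.2 \subset ltset n t.1 -> c \in children t -> parent c = t.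
Proof.
move=> Ht; rewrite !inE => /orP [/eqP ->|/eqP ->]; rewrite /parent /=;
  case: t Ht => t1 t2 /= Ht; congr (_, _).
  by rewrite setDUl setDv setU0; apply/setDidPl; rewrite -setI_eq0 (vnext_disj Ht).
by apply/setDidPl; rewrite -setI_eq0 (vnext_disj Ht).
Qed.

Lemma children_valid (t c : node n) :
  (t.1 < n)%N -> t.2 \subset ltset n t.1 -> c \in children t ->
  (c.1 <= n)%N && (c.2 \subset ltset n c.1).
Proof.
move=> Hn Ht; rewrite !inE => /orP [/eqP ->|/eqP ->] /=; rewrite Hn /= ltsetS.
  exact: setSU.
by apply: subset_trans Ht (subsetUl _ _).
Qed.

Lemma children_uniq (t : node n) :
  (t.1 < n)%N -> t.2 \subset ltset n t.1 -> uniq (children t).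
Proof.
move=> Hn Ht; rewrite /= andbT inE; apply/negP => /eqP [] /setP /(_ (Ordinal Hn)).
rewrite !inE eqxx orbT => /esym Hin.
by move: (subsetP Ht _ Hin); rewrite inE ltnn.
Qed.

Lemma bb_run_step f o c : o != [::] ->
  bb_run choose G f.+1 o c =
  if (choose G o).1 == n then c.+1
  else bb_run choose G f ([seq c <- children (choose G o) | independent G c.2] ++ rem (choose G o) o) c.+1.
Proof. by case: o. Qed.

Lemma run_bound f o H : Inv o H -> (bb_run choose G f o (size H) <= Mb)%N.
Proof.
elim: f o H => [|f IH] o H [Hu Hv Hp Hpot [i Hi Hanc]].
  apply: final_bound; first by move: Hu; rewrite cat_uniq => /and3P [].
  move=> x Hx; rewrite /Qn Hpot // andbT; apply: Hv; by rewrite mem_cat Hx orbT.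
have Hne : o != [::] by move: Hanc; case: (o) => //; rewrite in_nil.
rewrite bb_run_step //.
set t := choose G o.
have [Ht Hmax] := Hrule G Hne; rewrite -/t in Ht Hmax.
have Htv : valid t by apply: Hv; rewrite mem_cat Ht.
case/and3P: (Htv) => Ht1 Ht2 Ht3.
have Hpt : (#|I| <= potential t)%N := leq_trans (pot_anc Hi) (Hmax _ Hanc).
have HtH : t \notin H.
  apply/negP => HtH; move: Hu; rewrite cat_uniq => /and3P [_ /hasPn Hn _].
  by move: (Hn t HtH); rewrite Ht.
have Huo : uniq o by move: Hu; rewrite cat_uniq => /and3P [].
case: (eqVneq t.1 n) => Htn.
  apply: (final_bound (L := t :: H)); first by rewrite /= HtH; move: Hu; rewrite cat_uniq => /and3P [].
  move=> x; rewrite inE => /orP [/eqP ->|Hx]; first by rewrite /Qn Htv Hpt.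
  by rewrite /Qn Hpot // andbT; apply: Hv; rewrite mem_cat Hx orbT.
have Htn' : (t.1 < n)%N by rewrite ltn_neqAle Ht1 Htn.

apply: (IH _ (t :: H)).
set F := [seq c <- children t | independent G c.2].
set L0 := rem t o ++ t :: H.
have Hperm : perm_eq L0 (o ++ H).
  rewrite /L0 -[t :: H]/([:: t] ++ H) perm_catCA /= -cat_cons perm_cat2r perm_sym.
  exact: perm_to_rem.
have HmemL0 := perm_mem Hperm.
have Hc1 : forall c, c \in children t -> c.1 = t.1.+1.
  by move=> c; rewrite !inE => /orP [/eqP ->|/eqP ->].
have Hkey : forall c, c \in children t -> c \notin o ++ H.
  move=> c Hc; apply/negP => Hco.
  have := Hp c Hco; rewrite Hc1 // (parent_child Ht2 Hc) => /(_ isT) HH.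
  by rewrite HH in HtH.
have HF : forall c, c \in F -> c \in children t /\ independent G c.2.
  by move=> c; rewrite mem_filter => /andP [].
split.
- rewrite -catA cat_uniq; apply/and3P; split.
  + by apply: filter_uniq; apply: children_uniq.
  + apply/hasPn => x; rewrite HmemL0 => Hx; apply/negP => HxF.
    by have [Hc _] := HF x HxF; move: (Hkey x Hc); rewrite Hx.
  + by rewrite (perm_uniq Hperm).
- move=> x; rewrite -catA mem_cat => /orP [HxF|HxL0].
    have [Hc Hind] := HF x HxF.
    by case/andP: (children_valid Htn' Ht2 Hc) => A1 A2; rewrite /valid A1 A2 Hind.
  by apply: Hv; rewrite -HmemL0.
- move=> x; rewrite -catA mem_cat => /orP [HxF|HxL0] Hx0.
    have [Hc _] := HF x HxF.
    by rewrite (parent_child Ht2 Hc) mem_head.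
  by rewrite inE (Hp x _ Hx0) ?orbT // -HmemL0.
- by move=> x; rewrite inE => /orP [/eqP ->|Hx]; [exact: Hpt|exact: Hpot].
- case: (eqVneq (anc i) t) => Hat.
    have Hin : (i < n)%N by rewrite -Hat in Htn'.
    exists i.+1 => //.
    rewrite mem_cat; apply/orP; left; rewrite mem_filter; apply/andP; split.
      by apply: indep_sub HI; apply: subsetIl.
    rewrite -Hat /anc /= ltsetS setIUr.
    case: (boolP (Ordinal Hin \in I)) => Ho.
      have -> : I :&: vnext n i = vnext n i.
        apply/setIidPr; apply/subsetP => v; rewrite inE => /eqP Hvv.
        by have -> : v = Ordinal Hin by apply: val_inj.
      by rewrite inE eqxx.
    have -> : I :&: vnext n i = set0.
      apply/setP => v; rewrite !inE; apply/negbTE/negP => /andP [Hvv /eqP Hvi].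
      have Ev : v = Ordinal Hin by apply: val_inj.
      by move: Ho; rewrite -Ev Hvv.
    by rewrite setU0 !inE eqxx orbT.
  exists i => //; rewrite mem_cat; apply/orP; right.
  by rewrite (mem_rem_uniq _ Huo) inE Hat Hanc.
Qed.

Lemma nodes_bound : (nodes_handled choose G <= Mb)%N.
Proof.
apply: (@run_bound (2 ^ n.+1) [:: (0%N, set0)] [::]); split.
- by [].
- move=> x; rewrite cats0 inE => /eqP ->; rewrite /valid /= sub0set.
  by apply/forallP => y; rewrite inE.
- by move=> x; rewrite cats0 inE => /eqP ->.
- by [].
- exists 0%N => //; rewrite inE /anc; apply/eqP; congr (_, _).
  by apply/setP => v; rewrite !inE ltn0 andbF.
Qed.

End Alg.

Local Open Scope ring_scope.

Section Prob.
Variable R : realFieldType.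
Variable n : nat.
Variable p : R.
Hypothesis p0 : 0 <= p.
Hypothesis p1 : p <= 1.

Lemma sum_sub_le (I : finType) (P Q : pred I) (F : I -> R) :
  (forall i, P i -> Q i) -> (forall i, Q i -> 0 <= F i) ->
  \sum_(i | P i) F i <= \sum_(i | Q i) F i.
Proof.
move=> PQ F0; rewrite [X in _ <= X](bigID P) /=.
have -> : \sum_(i | Q i && P i) F i = \sum_(i | P i) F i.
  by apply: eq_bigl => i; case: (boolP (P i)) => Pi; rewrite ?andbT ?andbF ?PQ.
rewrite lerDl; apply: sumr_ge0 => i /andP [Qi _]; exact: F0.
Qed.

Lemma w_ge0 (G : {set 'I_n * 'I_n}) : 0 <= gnp_weight p G.
Proof. by rewrite /gnp_weight mulr_ge0 // exprn_ge0 // subr_ge0. Qed.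

Lemma w_add (G : {set 'I_n * 'I_n}) e :
  e \in gpairs n -> is_graph G -> e \notin G ->
  p * gnp_weight p G = (1 - p) * gnp_weight p (e |: G).
Proof.
move=> He HG HeG.
have Hsub : e |: G \subset gpairs n by rewrite subUset sub1set He; exact: HG.
have Hc := subset_leq_card Hsub.
rewrite card_gpairs cardsU1 HeG /= in Hc.
rewrite /gnp_weight cardsU1 HeG /= add1n.
rewrite add1n in Hc; rewrite -(subnSK Hc).
rewrite !exprS; ring.
Qed.

Lemma one_edge (D : pred {set 'I_n * 'I_n}) e :
  e \in gpairs n ->
  (forall G, is_graph G -> e \notin G -> D G -> D (e |: G)) ->
  \sum_(G | is_graph G && (e \notin G) && D G) gnp_weight p G <=
  (1 - p) * \sum_(G | is_graph G && D G) gnp_weight p G.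
Proof.
move=> He HD.
set S1 := \sum_(G | is_graph G && (e \notin G) && D G) gnp_weight p G.
set S2 := \sum_(G | is_graph G && (e \in G) && D G) gnp_weight p G.
have Hsplit : \sum_(G | is_graph G && D G) gnp_weight p G = S1 + S2.
  rewrite (bigID (fun G : {set 'I_n * 'I_n} => e \notin G)) /=; congr (_ + _); apply: eq_bigl => G.
    by rewrite -!andbA; congr (_ && _); rewrite andbC.
  by rewrite negbK -!andbA; congr (_ && _); rewrite andbC.
have Hreidx : \sum_(G | is_graph G && (e \notin G) && D G) gnp_weight p (e |: G) =
    \sum_(G | is_graph G && (e \in G) && D (G :\ e)) gnp_weight p G.
  rewrite [RHS](reindex_onto (fun G => e |: G) (fun G => G :\ e)) /=; last first.
    by move=> G /andP [/andP [_ HeG] _]; rewrite setD1K.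
  apply: eq_bigl => G.
  rewrite setU11 andbT.
  have -> : is_graph (e |: G) = is_graph G.
    by rewrite /is_graph subUset sub1set He.
  case: (boolP (e \in G)) => HeG /=.
    have -> : ((e |: G) :\ e == G) = false.
      by apply/negbTE/eqP => HH; move: HeG; rewrite -HH !inE eqxx.
    by rewrite !andbF.
  by rewrite setU1K // eqxx !andbT.
have H2 : \sum_(G | is_graph G && (e \notin G) && D G) gnp_weight p (e |: G) <= S2.
  rewrite Hreidx; apply: sum_sub_le => [G|G _]; last exact: w_ge0.
  move=> /andP [/andP [HG HeG] HDG]; rewrite HG HeG /=.
  have -> : G = e |: (G :\ e) by rewrite setD1K.
  apply: HD => //; first by apply: subset_trans HG; apply: subD1set.
  by rewrite !inE eqxx.
have H1 : p * S1 <= (1 - p) * S2.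
  rewrite /S1 mulr_sumr.
  rewrite (eq_bigr (fun G => (1 - p) * gnp_weight p (e |: G))); last first.
    by move=> G /andP [/andP [HG HeG] _]; rewrite (w_add He).
  by rewrite -mulr_sumr; apply: ler_wpM2l; rewrite ?subr_ge0.
rewrite Hsplit -subr_ge0.
have -> : (1 - p) * (S1 + S2) - S1 = (1 - p) * S2 - p * S1 by ring.
by rewrite subr_ge0.
Qed.

Lemma avoid (B : pred {set 'I_n * 'I_n}) :
  (forall G G' : {set 'I_n * 'I_n}, is_graph G' -> G \subset G' -> B G -> B G') ->
  forall F : {set 'I_n * 'I_n}, F \subset gpairs n ->
  \sum_(G | is_graph G && (F :&: G == set0) && B G) gnp_weight p G <=
  (1 - p) ^+ #|F| * \sum_(G | is_graph G && B G) gnp_weight p G.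
Proof.
move=> HB F; move Hk: #|F| => k; elim: k F Hk => [|k IH] F Hk HF.
  have -> : F = set0 by apply/eqP; rewrite -cards_eq0 Hk.
  rewrite expr0 mul1r; apply: sum_sub_le => [G|G _]; last exact: w_ge0.
  by move=> /andP [/andP [-> _] ->].
have : (0 < #|F|)%N by rewrite Hk.
rewrite card_gt0 => /set0Pn [e He].
have HF' : #|F :\ e| = k by move: Hk; rewrite (cardsD1 e F) He add1n => -[].
have HeP : e \in gpairs n by apply: (subsetP HF).
pose D := fun G : {set 'I_n * 'I_n} => ((F :\ e) :&: G == set0) && B G.
have -> : \sum_(G | is_graph G && (F :&: G == set0) && B G) gnp_weight p G =
    \sum_(G | is_graph G && (e \notin G) && D G) gnp_weight p G.
  apply: eq_bigl => G; rewrite /D -!andbA; congr (_ && _).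
  rewrite andbA; congr (_ && _).
  apply/eqP/andP => [H|[HeG /eqP H]].
    split.
      by apply/negP => HeG; move/setP: H => /(_ e); rewrite !inE He HeG.
    apply/eqP/setP => x; rewrite !inE; move/setP: H => /(_ x); rewrite !inE => H'.
    by apply/negbTE/negP => /andP [/andP [_ HF1] HG1]; rewrite HF1 HG1 in H'.
  apply/setP => x; rewrite !inE; move/setP: H => /(_ x); rewrite !inE => H'.
  apply/negbTE/negP => /andP [HxF HxG].
  case: (eqVneq x e) => Hxe.
    by move: HxG; rewrite Hxe (negbTE HeG).
  by rewrite Hxe HxF HxG in H'.
apply: le_trans (one_edge HeP _) _.
  move=> G HG HeG /andP [HF0 HBG]; apply/andP; split.
    rewrite setIUr (eqP HF0) setU0; apply/eqP/setP => x; rewrite !inE.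
    by apply/negP => /andP [/andP [Hxe _] /eqP Hx]; rewrite Hx eqxx in Hxe.
  apply: HB HBG; last exact: subsetUr.
  by rewrite /is_graph subUset sub1set HeP.
rewrite exprS -mulrA; apply: ler_wpM2l; first by rewrite subr_ge0.
rewrite (eq_bigl (fun G => is_graph G && ((F :\ e) :&: G == set0) && B G)); last by move=> G; rewrite /D andbA.
apply: IH => //; apply: subset_trans HF; exact: subD1set.
Qed.

End Prob.

Lemma indep_bound (R : realFieldType) n (p : R) (S : {set 'I_n})
  (B : pred {set 'I_n * 'I_n}) :
  0 <= p -> p <= 1 ->
  (forall G G' : {set 'I_n * 'I_n}, is_graph G' -> G \subset G' -> B G -> B G') ->
  gnp_prob p (fun G => independent G S && B G) <=
  (1 - p) ^+ 'C(#|S|, 2) * gnp_prob p B.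
Proof.
move=> p0 p1 HB; rewrite /gnp_prob -card_pairs_in.
apply: le_trans (avoid p0 p1 HB _); last first.
  by apply/subsetP => e; rewrite inE => /andP [].
apply: sum_sub_le => [G|G _]; last exact: w_ge0.
move=> /andP [HG /andP [Hind HBG]]; rewrite HG HBG andbT /=.
apply/eqP/setP => e; rewrite !inE; apply/negbTE/negP.
move=> /andP [/andP [He /andP [H1 H2]] HeG].
move/forallP: Hind => /(_ e.1); rewrite H1 /= => /forallP /(_ e.2); rewrite H2 /=.
have -> : e.1 != e.2.
  by apply/eqP => E; move: He; rewrite E ltnn.
by rewrite /adj -surjective_pairing HeG.
Qed.

Lemma edge_event_mono (R : realFieldType) n i k (G G' : {set 'I_n * 'I_n}) :
  is_graph G' -> G \subset G' -> @edge_event R n i k G -> @edge_event R n i k G'.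
Proof.
rewrite /edge_event => _ HGG /andP [-> H] /=; apply: le_trans H _.
by rewrite ler_nat; apply: subset_leq_card.
Qed.

Lemma sum_subsets (R : realFieldType) (T : finType) (A : {set T}) (f : nat -> R) :
  \sum_(S : {set T} | S \subset A) f #|S| =
  \sum_(k < #|A|.+1) 'C(#|A|, k)%:R * f k.
Proof.
rewrite (partition_big (fun S : {set T} => (inord #|S| : 'I_(#|A|.+1))) xpredT) //=.
apply: eq_bigr => k _.
have Hk := ltn_ord k.
rewrite (eq_bigr (fun _ => f k)); last first.
  move=> S /andP [HS /eqP <-]; rewrite inordK //; rewrite ltnS; exact: subset_leq_card.
rewrite sumr_const -cards_draws mulr_natl; congr (_ *+ _).
apply: eq_card => S; rewrite unfold_in !inE /=; case: (boolP (S \subset A)) => //= HS.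
apply/eqP/eqP => E.
  by rewrite -E inordK // ltnS subset_leq_card.
apply: val_inj; rewrite /= inordK; first exact: E.
by rewrite ltnS subset_leq_card.
Qed.

Lemma event_of (R : realFieldType) n (G : {set 'I_n * 'I_n}) (I S : {set 'I_n}) i :
  (0 < n)%N -> (i <= n)%N ->
  (n ^ 2 <= #|I| * (2 * #|G| + n))%N ->
  (#|I| <= #|S| + n - i)%N ->
  @edge_event R n i #|S| G.
Proof.
move=> Hn Hi HT Hp.
rewrite /edge_event.
move: HT Hp; set a := #|I|; set s := #|S|; set g := #|G| => HT Hp.
have HK : (n ^ 2 <= (n - i + s) * (2 * g + n))%N.
  apply: leq_trans HT _; apply: leq_mul => //; lia.
have HK0 : (0 < n - i + s)%N.
  case: (posnP (n - i + s)) => // H0; move: HK; rewrite H0 mul0n leqn0 expn_eq0.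
  by case/andP => /eqP H0'; rewrite H0' in Hn.
rewrite /edge_event -lt0n HK0 /=.
set K := (n - i + s)%N in HK HK0 *.
have HKr : 0 < (K%:R : R) by rewrite ltr0n.
rewrite lerBlDr ler_pdivrMr ?mulr_gt0 ?ltr0n //.
have -> : (g%:R + n%:R / 2) * (2 * K%:R) = K%:R * (2 * g%:R + n%:R) :> R.
  by field.
by rewrite -natrX -natrM -natrD -natrM ler_nat.
Qed.

Lemma count_bound (R : realFieldType) n
    (choose : {set 'I_n * 'I_n} -> seq (node n) -> node n)
    (G : {set 'I_n * 'I_n}) :
  (0 < n)%N -> best_first_rule choose -> is_graph G ->
  (nodes_handled choose G <=
   \sum_(i < n.+1) \sum_(S : {set 'I_n} | S \subset ltset n i)
      (independent G S && @edge_event R n i #|S| G))%N.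
Proof.
move=> Hn Hrule HG.
have [I [_ HI HT]] := turan_U HG [set: 'I_n].
rewrite cardsT card_ord in HT.
have HT' : (n ^ 2 <= #|I| * (2 * #|G| + n))%N.
  apply: leq_trans HT _; apply: leq_mul => //; rewrite leq_add2r; exact: oc_total.
apply: leq_trans (nodes_bound Hrule HI) _.
rewrite /Mb -sum1dep_card.
rewrite (eq_bigr (fun y : 'I_n.+1 * {set 'I_n} => 1%N)) //.
rewrite big_mkcond /= -(pair_big xpredT xpredT (fun i S => if Qn G I (val i, S) then 1%N else 0%N)) /=.
apply: leq_sum => i _; rewrite [X in (_ <= X)%N]big_mkcond /=; apply: leq_sum => S _.
case: ifP => // /andP [/and3P [Hi HS Hind] Hpot] /=.
rewrite HS Hind /=.
by rewrite (event_of R Hn Hi HT' Hpot).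
Qed.

Theorem theorem2 (R : realFieldType) (n : nat) (p : R)
    (choose : {set 'I_n * 'I_n} -> seq (node n) -> node n) :
  (0 < n)%N -> 0 <= p -> p <= 1 -> best_first_rule choose ->
  T_avg p choose <=
    \sum_(0 <= i < n.+1) \sum_(0 <= k < i.+1)
      'C(i, k)%:R * (1 - p) ^+ 'C(k, 2) * gnp_prob p (@edge_event R n i k).
Proof.
move=> Hn p0 p1 Hrule.
rewrite /T_avg /gnp_expect.
pose b := fun (G : {set 'I_n * 'I_n}) (i : 'I_n.+1) (S : {set 'I_n}) =>
  independent G S && @edge_event R n i #|S| G.
apply: (@le_trans _ _ (\sum_(G | is_graph G) gnp_weight p G *
   (\sum_(i < n.+1) \sum_(S : {set 'I_n} | S \subset ltset n i) (b G i S : nat))%:R)).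
  apply: ler_sum => G HG; apply: ler_wpM2l; first exact: w_ge0.
  by rewrite ler_nat; apply: count_bound.
under eq_bigr do rewrite natr_sum mulr_sumr.
rewrite exchange_big /=.
rewrite big_mkord; apply: ler_sum => i _.
under eq_bigr do rewrite natr_sum mulr_sumr.
rewrite exchange_big /=.
have Hi : (i <= n)%N by rewrite -ltnS.
apply: (@le_trans _ _ (\sum_(S : {set 'I_n} | S \subset ltset n i)
    ((1 - p) ^+ 'C(#|S|, 2) * gnp_prob p (@edge_event R n i #|S|)))).
  apply: ler_sum => S _.
  apply: le_trans (indep_bound S p0 p1 (@edge_event_mono R n i #|S|)).
  rewrite /gnp_prob big_mkcondr /=; apply: ler_sum => G _.
  by rewrite /b; case: (_ && _); rewrite ?mulr1 ?mulr0.
rewrite (sum_subsets (ltset n i) (fun k => (1 - p) ^+ 'C(k, 2) * gnp_prob p (@edge_event R n i k))).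
rewrite card_ltset // big_mkord; apply: ler_sum => k _.
by rewrite mulrA.
Qed.
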